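(* For every integer $n\geq 5$, $\dot{\imath}_{[1,2]}(P_5\Box P_n)=\left\lfloor \frac{6n+8}{5}\right\rfloor$.
   Context: $P_k$ denotes the path on $k$ vertices and $P_m\Box P_n$ the Cartesian product of two paths (the $m\times n$ grid graph). A set $S$ of vertices of a graph $G$ is independent if no two vertices of $S$ are adjacent, and dominating if every vertex not in $S$ has at least one neighbor in $S$. An independent $[1,2]$-set of $G$ is an independent dominating set $S$ such that every vertex $v\in V(G)\setminus S$ has at least one and at most two neighbors in $S$. When $G$ has an independent $[1,2]$-set, $\dot{\imath}_{[1,2]}(G)$ denotes the minimum cardinality of an independent $[1,2]$-set of $G$ (the statement includes the existence of such a set). *)

(* Defs.v *)
From mathcomp Require Import all_boot.
Set Implicit Arguments. Unset Strict Implicit. Unset Printing Implicit Defensive.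

Definition grid_adj (m n : nat) : rel ('I_m * 'I_n) :=
  fun u v =>
    ((u.1 == v.1) && ((u.2.+1 == v.2 :> nat) || (v.2.+1 == u.2 :> nat)))
    || ((u.2 == v.2) && ((u.1.+1 == v.1 :> nat) || (v.1.+1 == u.1 :> nat))).
Arguments grid_adj : clear implicits.

Definition independent (T : finType) (adj : rel T) (S : {set T}) : bool :=
  [forall u in S, forall v in S, ~~ adj u v].

Definition nbr_count (T : finType) (adj : rel T) (S : {set T}) (v : T) : nat :=
  #|[set u in S | adj v u]|.

Definition dominating (T : finType) (adj : rel T) (S : {set T}) : bool :=
  [forall v in ~: S, 1 <= nbr_count adj S v].

Definition indep12 (T : finType) (adj : rel T) (S : {set T}) : bool :=
  [&& independent adj S, dominating adj S &
      [forall v in ~: S, (1 <= nbr_count adj S v) && (nbr_count adj S v <= 2)]].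

Definition indep12_number_is (T : finType) (adj : rel T) (k : nat) : Prop :=
  (exists S : {set T}, indep12 adj S /\ #|S| = k) /\
  (forall S : {set T}, indep12 adj S -> k <= #|S|).

(* Main.v *)
Require Import Defs.
From mathcomp Require Import all_boot.
From mathcomp Require Import zify.
Set Implicit Arguments. Unset Strict Implicit. Unset Printing Implicit Defensive.

Definition bitm (m i : nat) : bool := odd (m %/ 2 ^ i).
Definition okA (l r up dn s : bool) : bool :=
  ~~ (s && r) && ~~ (s && dn) && (s || ((0 < r + l + dn + up) && (r + l + dn + up <= 2))).
Definition validc (a b c : nat) : bool :=
  okA (bitm a 0) (bitm c 0) false (bitm b 1) (bitm b 0) &&
  okA (bitm a 1) (bitm c 1) (bitm b 0) (bitm b 2) (bitm b 1) &&
  okA (bitm a 2) (bitm c 2) (bitm b 1) (bitm b 3) (bitm b 2) &&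
  okA (bitm a 3) (bitm c 3) (bitm b 2) (bitm b 4) (bitm b 3) &&
  okA (bitm a 4) (bitm c 4) (bitm b 3) false (bitm b 4).
Definition popc (b : nat) : nat := bitm b 0 + bitm b 1 + bitm b 2 + bitm b 3 + bitm b 4.
Definition tbl : seq (seq (seq nat)) := [::
[:: [:: 6; 6; 6; 6; 6; 6; 6; 6; 6; 6; 6; 6; 6; 6; 6; 6; 6; 6; 6; 6; 6; 6; 6; 6; 6; 6; 6; 6; 6; 6; 6; 6];
 [:: 100; 100; 100; 100; 100; 100; 100; 100; 100; 100; 100; 100; 100; 100; 100; 100; 100; 100; 100; 100; 100; 100; 100; 100; 100; 100; 100; 100; 100; 100; 100; 100];
 [:: 100; 100; 100; 100; 100; 100; 100; 100; 100; 100; 100; 100; 100; 100; 100; 100; 100; 100; 100; 100; 100; 100; 100; 100; 100; 100; 100; 100; 100; 100; 100; 100];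
 [:: 100; 100; 100; 100; 100; 100; 100; 100; 100; 100; 100; 100; 100; 100; 100; 100; 100; 100; 100; 100; 100; 100; 100; 100; 100; 100; 100; 100; 100; 100; 100; 100];
 [:: 100; 100; 100; 100; 100; 100; 100; 100; 100; 100; 100; 100; 100; 100; 100; 100; 100; 100; 100; 100; 100; 100; 100; 100; 100; 100; 100; 100; 100; 100; 100; 100];
 [:: 100; 100; 100; 100; 100; 100; 100; 100; 100; 100; 100; 100; 100; 100; 100; 100; 100; 100; 100; 100; 100; 100; 100; 100; 100; 100; 100; 100; 100; 100; 100; 100];
 [:: 100; 100; 100; 100; 100; 100; 100; 100; 100; 100; 100; 100; 100; 100; 100; 100; 100; 100; 100; 100; 100; 100; 100; 100; 100; 100; 100; 100; 100; 100; 100; 100];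
 [:: 100; 100; 100; 100; 100; 100; 100; 100; 100; 100; 100; 100; 100; 100; 100; 100; 100; 100; 100; 100; 100; 100; 100; 100; 100; 100; 100; 100; 100; 100; 100; 100];
 [:: 100; 100; 100; 100; 100; 100; 100; 100; 100; 100; 100; 100; 100; 100; 100; 100; 100; 100; 100; 100; 100; 100; 100; 100; 100; 100; 100; 100; 100; 100; 100; 100];
 [:: 100; 100; 100; 100; 100; 100; 100; 100; 100; 100; 100; 100; 100; 100; 100; 100; 100; 100; 100; 100; 100; 100; 100; 100; 100; 100; 100; 100; 100; 100; 100; 100];
 [:: 100; 100; 100; 100; 100; 100; 100; 100; 100; 100; 100; 100; 100; 100; 100; 100; 100; 100; 100; 100; 100; 100; 100; 100; 100; 100; 100; 100; 100; 100; 100; 100];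
 [:: 100; 100; 100; 100; 100; 100; 100; 100; 100; 100; 100; 100; 100; 100; 100; 100; 100; 100; 100; 100; 100; 100; 100; 100; 100; 100; 100; 100; 100; 100; 100; 100];
 [:: 100; 100; 100; 100; 100; 100; 100; 100; 100; 100; 100; 100; 100; 100; 100; 100; 100; 100; 100; 100; 100; 100; 100; 100; 100; 100; 100; 100; 100; 100; 100; 100];
 [:: 100; 100; 100; 100; 100; 100; 100; 100; 100; 100; 100; 100; 100; 100; 100; 100; 100; 100; 100; 100; 100; 100; 100; 100; 100; 100; 100; 100; 100; 100; 100; 100];
 [:: 100; 100; 100; 100; 100; 100; 100; 100; 100; 100; 100; 100; 100; 100; 100; 100; 100; 100; 100; 100; 100; 100; 100; 100; 100; 100; 100; 100; 100; 100; 100; 100];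
 [:: 100; 100; 100; 100; 100; 100; 100; 100; 100; 100; 100; 100; 100; 100; 100; 100; 100; 100; 100; 100; 100; 100; 100; 100; 100; 100; 100; 100; 100; 100; 100; 100];
 [:: 100; 100; 100; 100; 100; 100; 100; 100; 100; 100; 100; 100; 100; 100; 100; 100; 100; 100; 100; 100; 100; 100; 100; 100; 100; 100; 100; 100; 100; 100; 100; 100];
 [:: 100; 100; 100; 100; 100; 100; 100; 100; 100; 100; 100; 100; 100; 100; 100; 100; 100; 100; 100; 100; 100; 100; 100; 100; 100; 100; 100; 100; 100; 100; 100; 100];
 [:: 100; 100; 100; 100; 100; 100; 100; 100; 100; 100; 100; 100; 100; 100; 100; 100; 100; 100; 100; 100; 100; 100; 100; 100; 100; 100; 100; 100; 100; 100; 100; 100];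
 [:: 100; 100; 100; 100; 100; 100; 100; 100; 100; 100; 100; 100; 100; 100; 100; 100; 100; 100; 100; 100; 100; 100; 100; 100; 100; 100; 100; 100; 100; 100; 100; 100];
 [:: 100; 100; 100; 100; 100; 100; 100; 100; 100; 100; 100; 100; 100; 100; 100; 100; 100; 100; 100; 100; 100; 100; 100; 100; 100; 100; 100; 100; 100; 100; 100; 100];
 [:: 100; 100; 100; 100; 100; 100; 100; 100; 100; 100; 100; 100; 100; 100; 100; 100; 100; 100; 100; 100; 100; 100; 100; 100; 100; 100; 100; 100; 100; 100; 100; 100];
 [:: 100; 100; 100; 100; 100; 100; 100; 100; 100; 100; 100; 100; 100; 100; 100; 100; 100; 100; 100; 100; 100; 100; 100; 100; 100; 100; 100; 100; 100; 100; 100; 100];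
 [:: 100; 100; 100; 100; 100; 100; 100; 100; 100; 100; 100; 100; 100; 100; 100; 100; 100; 100; 100; 100; 100; 100; 100; 100; 100; 100; 100; 100; 100; 100; 100; 100];
 [:: 100; 100; 100; 100; 100; 100; 100; 100; 100; 100; 100; 100; 100; 100; 100; 100; 100; 100; 100; 100; 100; 100; 100; 100; 100; 100; 100; 100; 100; 100; 100; 100];
 [:: 100; 100; 100; 100; 100; 100; 100; 100; 100; 100; 100; 100; 100; 100; 100; 100; 100; 100; 100; 100; 100; 100; 100; 100; 100; 100; 100; 100; 100; 100; 100; 100];
 [:: 100; 100; 100; 100; 100; 100; 100; 100; 100; 100; 100; 100; 100; 100; 100; 100; 100; 100; 100; 100; 100; 100; 100; 100; 100; 100; 100; 100; 100; 100; 100; 100];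
 [:: 100; 100; 100; 100; 100; 100; 100; 100; 100; 100; 100; 100; 100; 100; 100; 100; 100; 100; 100; 100; 100; 100; 100; 100; 100; 100; 100; 100; 100; 100; 100; 100];
 [:: 100; 100; 100; 100; 100; 100; 100; 100; 100; 100; 100; 100; 100; 100; 100; 100; 100; 100; 100; 100; 100; 100; 100; 100; 100; 100; 100; 100; 100; 100; 100; 100];
 [:: 100; 100; 100; 100; 100; 100; 100; 100; 100; 100; 100; 100; 100; 100; 100; 100; 100; 100; 100; 100; 100; 100; 100; 100; 100; 100; 100; 100; 100; 100; 100; 100];
 [:: 100; 100; 100; 100; 100; 100; 100; 100; 100; 100; 100; 100; 100; 100; 100; 100; 100; 100; 100; 100; 100; 100; 100; 100; 100; 100; 100; 100; 100; 100; 100; 100];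
 [:: 100; 100; 100; 100; 100; 100; 100; 100; 100; 100; 100; 100; 100; 100; 100; 100; 100; 100; 100; 100; 100; 100; 100; 100; 100; 100; 100; 100; 100; 100; 100; 100]];
[:: [:: 100; 100; 100; 100; 100; 100; 100; 100; 100; 100; 100; 100; 100; 100; 100; 100; 100; 100; 100; 100; 100; 100; 100; 100; 100; 100; 100; 100; 100; 100; 100; 0];
 [:: 100; 100; 100; 100; 100; 100; 100; 100; 100; 100; 100; 100; 100; 100; 100; 100; 100; 100; 100; 100; 100; 100; 100; 100; 100; 100; 100; 100; 5; 100; 5; 100];
 [:: 100; 100; 100; 100; 100; 100; 100; 100; 100; 100; 100; 100; 100; 100; 100; 100; 100; 100; 100; 100; 100; 100; 100; 100; 5; 5; 100; 100; 5; 5; 100; 100];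
 [:: 100; 100; 100; 100; 100; 100; 100; 100; 100; 100; 100; 100; 100; 100; 100; 100; 100; 100; 100; 100; 100; 100; 100; 100; 100; 100; 100; 100; 100; 100; 100; 100];
 [:: 100; 100; 100; 100; 100; 100; 100; 100; 100; 100; 100; 100; 100; 100; 100; 100; 100; 5; 100; 5; 100; 100; 100; 100; 100; 5; 100; 5; 100; 100; 100; 100];
 [:: 100; 100; 100; 100; 100; 100; 100; 100; 100; 100; 100; 100; 100; 100; 100; 100; 10; 100; 100; 100; 100; 100; 100; 100; 10; 100; 100; 100; 100; 100; 100; 100];
 [:: 100; 100; 100; 100; 100; 100; 100; 100; 100; 100; 100; 100; 100; 100; 100; 100; 100; 100; 100; 100; 100; 100; 100; 100; 100; 100; 100; 100; 100; 100; 100; 100];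
 [:: 100; 100; 100; 100; 100; 100; 100; 100; 100; 100; 100; 100; 100; 100; 100; 100; 100; 100; 100; 100; 100; 100; 100; 100; 100; 100; 100; 100; 100; 100; 100; 100];
 [:: 100; 100; 100; 5; 100; 100; 100; 5; 100; 100; 100; 100; 100; 100; 100; 100; 100; 100; 100; 5; 100; 100; 100; 5; 100; 100; 100; 100; 100; 100; 100; 100];
 [:: 10; 100; 10; 100; 10; 100; 10; 100; 100; 100; 100; 100; 100; 100; 100; 100; 10; 100; 10; 100; 10; 100; 10; 100; 100; 100; 100; 100; 100; 100; 100; 100];
 [:: 10; 10; 100; 100; 100; 100; 100; 100; 100; 100; 100; 100; 100; 100; 100; 100; 10; 10; 100; 100; 100; 100; 100; 100; 100; 100; 100; 100; 100; 100; 100; 100];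
 [:: 100; 100; 100; 100; 100; 100; 100; 100; 100; 100; 100; 100; 100; 100; 100; 100; 100; 100; 100; 100; 100; 100; 100; 100; 100; 100; 100; 100; 100; 100; 100; 100];
 [:: 100; 100; 100; 100; 100; 100; 100; 100; 100; 100; 100; 100; 100; 100; 100; 100; 100; 100; 100; 100; 100; 100; 100; 100; 100; 100; 100; 100; 100; 100; 100; 100];
 [:: 100; 100; 100; 100; 100; 100; 100; 100; 100; 100; 100; 100; 100; 100; 100; 100; 100; 100; 100; 100; 100; 100; 100; 100; 100; 100; 100; 100; 100; 100; 100; 100];
 [:: 100; 100; 100; 100; 100; 100; 100; 100; 100; 100; 100; 100; 100; 100; 100; 100; 100; 100; 100; 100; 100; 100; 100; 100; 100; 100; 100; 100; 100; 100; 100; 100];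
 [:: 100; 100; 100; 100; 100; 100; 100; 100; 100; 100; 100; 100; 100; 100; 100; 100; 100; 100; 100; 100; 100; 100; 100; 100; 100; 100; 100; 100; 100; 100; 100; 100];
 [:: 100; 100; 100; 100; 100; 100; 100; 5; 100; 100; 100; 100; 100; 100; 100; 5; 100; 100; 100; 100; 100; 100; 100; 100; 100; 100; 100; 100; 100; 100; 100; 100];
 [:: 100; 100; 100; 100; 10; 100; 10; 100; 100; 100; 100; 100; 10; 100; 10; 100; 100; 100; 100; 100; 100; 100; 100; 100; 100; 100; 100; 100; 100; 100; 100; 100];
 [:: 10; 10; 100; 100; 10; 10; 100; 100; 10; 10; 100; 100; 10; 10; 100; 100; 100; 100; 100; 100; 100; 100; 100; 100; 100; 100; 100; 100; 100; 100; 100; 100];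
 [:: 100; 100; 100; 100; 100; 100; 100; 100; 100; 100; 100; 100; 100; 100; 100; 100; 100; 100; 100; 100; 100; 100; 100; 100; 100; 100; 100; 100; 100; 100; 100; 100];
 [:: 100; 10; 100; 10; 100; 100; 100; 100; 100; 100; 100; 100; 100; 100; 100; 100; 100; 100; 100; 100; 100; 100; 100; 100; 100; 100; 100; 100; 100; 100; 100; 100];
 [:: 15; 100; 100; 100; 100; 100; 100; 100; 100; 100; 100; 100; 100; 100; 100; 100; 100; 100; 100; 100; 100; 100; 100; 100; 100; 100; 100; 100; 100; 100; 100; 100];
 [:: 100; 100; 100; 100; 100; 100; 100; 100; 100; 100; 100; 100; 100; 100; 100; 100; 100; 100; 100; 100; 100; 100; 100; 100; 100; 100; 100; 100; 100; 100; 100; 100];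
 [:: 100; 100; 100; 100; 100; 100; 100; 100; 100; 100; 100; 100; 100; 100; 100; 100; 100; 100; 100; 100; 100; 100; 100; 100; 100; 100; 100; 100; 100; 100; 100; 100];
 [:: 100; 100; 100; 100; 100; 100; 100; 100; 100; 100; 100; 100; 100; 100; 100; 100; 100; 100; 100; 100; 100; 100; 100; 100; 100; 100; 100; 100; 100; 100; 100; 100];
 [:: 100; 100; 100; 100; 100; 100; 100; 100; 100; 100; 100; 100; 100; 100; 100; 100; 100; 100; 100; 100; 100; 100; 100; 100; 100; 100; 100; 100; 100; 100; 100; 100];
 [:: 100; 100; 100; 100; 100; 100; 100; 100; 100; 100; 100; 100; 100; 100; 100; 100; 100; 100; 100; 100; 100; 100; 100; 100; 100; 100; 100; 100; 100; 100; 100; 100];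
 [:: 100; 100; 100; 100; 100; 100; 100; 100; 100; 100; 100; 100; 100; 100; 100; 100; 100; 100; 100; 100; 100; 100; 100; 100; 100; 100; 100; 100; 100; 100; 100; 100];
 [:: 100; 100; 100; 100; 100; 100; 100; 100; 100; 100; 100; 100; 100; 100; 100; 100; 100; 100; 100; 100; 100; 100; 100; 100; 100; 100; 100; 100; 100; 100; 100; 100];
 [:: 100; 100; 100; 100; 100; 100; 100; 100; 100; 100; 100; 100; 100; 100; 100; 100; 100; 100; 100; 100; 100; 100; 100; 100; 100; 100; 100; 100; 100; 100; 100; 100];
 [:: 100; 100; 100; 100; 100; 100; 100; 100; 100; 100; 100; 100; 100; 100; 100; 100; 100; 100; 100; 100; 100; 100; 100; 100; 100; 100; 100; 100; 100; 100; 100; 100];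
 [:: 100; 100; 100; 100; 100; 100; 100; 100; 100; 100; 100; 100; 100; 100; 100; 100; 100; 100; 100; 100; 100; 100; 100; 100; 100; 100; 100; 100; 100; 100; 100; 100]];
[:: [:: 100; 100; 100; 100; 100; 100; 100; 100; 100; 100; 9; 9; 100; 4; 9; 4; 100; 100; 100; 100; 100; 4; 4; 4; 100; 100; 9; 9; 100; 4; 4; 4];
 [:: 100; 100; 100; 100; 100; 100; 100; 100; 9; 100; 9; 100; 9; 100; 9; 100; 100; 100; 100; 100; 9; 100; 100; 100; 9; 100; 9; 100; 9; 100; 9; 100];
 [:: 100; 100; 100; 100; 100; 100; 100; 100; 100; 100; 100; 100; 100; 100; 100; 100; 9; 100; 100; 100; 9; 100; 100; 100; 9; 100; 100; 100; 9; 100; 100; 100];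
 [:: 100; 100; 100; 100; 100; 100; 100; 100; 100; 100; 100; 100; 100; 100; 100; 100; 100; 100; 100; 100; 100; 100; 100; 100; 100; 100; 100; 100; 100; 100; 100; 100];
 [:: 9; 9; 9; 9; 100; 100; 100; 100; 9; 9; 9; 9; 100; 100; 100; 100; 9; 9; 9; 9; 100; 100; 100; 100; 9; 9; 9; 9; 100; 100; 100; 100];
 [:: 100; 100; 100; 100; 100; 100; 100; 100; 100; 100; 100; 100; 100; 100; 100; 100; 100; 100; 100; 100; 100; 100; 100; 100; 100; 100; 100; 100; 100; 100; 100; 100];
 [:: 100; 100; 100; 100; 100; 100; 100; 100; 100; 100; 100; 100; 100; 100; 100; 100; 100; 100; 100; 100; 100; 100; 100; 100; 100; 100; 100; 100; 100; 100; 100; 100];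
 [:: 100; 100; 100; 100; 100; 100; 100; 100; 100; 100; 100; 100; 100; 100; 100; 100; 100; 100; 100; 100; 100; 100; 100; 100; 100; 100; 100; 100; 100; 100; 100; 100];
 [:: 100; 9; 100; 9; 100; 9; 100; 9; 100; 100; 100; 100; 100; 100; 100; 100; 100; 100; 100; 100; 100; 100; 100; 100; 100; 100; 100; 100; 100; 100; 100; 100];
 [:: 14; 100; 100; 100; 14; 100; 100; 100; 100; 100; 100; 100; 100; 100; 100; 100; 100; 100; 100; 100; 100; 100; 100; 100; 100; 100; 100; 100; 100; 100; 100; 100];
 [:: 100; 100; 100; 100; 100; 100; 100; 100; 100; 100; 100; 100; 100; 100; 100; 100; 100; 100; 100; 100; 100; 100; 100; 100; 100; 100; 100; 100; 100; 100; 100; 100];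
 [:: 100; 100; 100; 100; 100; 100; 100; 100; 100; 100; 100; 100; 100; 100; 100; 100; 100; 100; 100; 100; 100; 100; 100; 100; 100; 100; 100; 100; 100; 100; 100; 100];
 [:: 100; 100; 100; 100; 100; 100; 100; 100; 100; 100; 100; 100; 100; 100; 100; 100; 100; 100; 100; 100; 100; 100; 100; 100; 100; 100; 100; 100; 100; 100; 100; 100];
 [:: 100; 100; 100; 100; 100; 100; 100; 100; 100; 100; 100; 100; 100; 100; 100; 100; 100; 100; 100; 100; 100; 100; 100; 100; 100; 100; 100; 100; 100; 100; 100; 100];
 [:: 100; 100; 100; 100; 100; 100; 100; 100; 100; 100; 100; 100; 100; 100; 100; 100; 100; 100; 100; 100; 100; 100; 100; 100; 100; 100; 100; 100; 100; 100; 100; 100];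
 [:: 100; 100; 100; 100; 100; 100; 100; 100; 100; 100; 100; 100; 100; 100; 100; 100; 100; 100; 100; 100; 100; 100; 100; 100; 100; 100; 100; 100; 100; 100; 100; 100];
 [:: 100; 100; 9; 9; 100; 9; 9; 9; 100; 100; 9; 9; 100; 100; 9; 9; 100; 100; 100; 100; 100; 100; 100; 100; 100; 100; 100; 100; 100; 100; 100; 100];
 [:: 9; 100; 9; 100; 9; 100; 9; 100; 9; 100; 9; 100; 9; 100; 9; 100; 100; 100; 100; 100; 100; 100; 100; 100; 100; 100; 100; 100; 100; 100; 100; 100];
 [:: 14; 100; 100; 100; 14; 100; 100; 100; 100; 100; 100; 100; 100; 100; 100; 100; 100; 100; 100; 100; 100; 100; 100; 100; 100; 100; 100; 100; 100; 100; 100; 100];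
 [:: 100; 100; 100; 100; 100; 100; 100; 100; 100; 100; 100; 100; 100; 100; 100; 100; 100; 100; 100; 100; 100; 100; 100; 100; 100; 100; 100; 100; 100; 100; 100; 100];
 [:: 100; 100; 100; 100; 100; 100; 100; 100; 100; 100; 100; 100; 100; 100; 100; 100; 100; 100; 100; 100; 100; 100; 100; 100; 100; 100; 100; 100; 100; 100; 100; 100];
 [:: 100; 100; 100; 100; 100; 100; 100; 100; 100; 100; 100; 100; 100; 100; 100; 100; 100; 100; 100; 100; 100; 100; 100; 100; 100; 100; 100; 100; 100; 100; 100; 100];
 [:: 100; 100; 100; 100; 100; 100; 100; 100; 100; 100; 100; 100; 100; 100; 100; 100; 100; 100; 100; 100; 100; 100; 100; 100; 100; 100; 100; 100; 100; 100; 100; 100];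
 [:: 100; 100; 100; 100; 100; 100; 100; 100; 100; 100; 100; 100; 100; 100; 100; 100; 100; 100; 100; 100; 100; 100; 100; 100; 100; 100; 100; 100; 100; 100; 100; 100];
 [:: 100; 100; 100; 100; 100; 100; 100; 100; 100; 100; 100; 100; 100; 100; 100; 100; 100; 100; 100; 100; 100; 100; 100; 100; 100; 100; 100; 100; 100; 100; 100; 100];
 [:: 100; 100; 100; 100; 100; 100; 100; 100; 100; 100; 100; 100; 100; 100; 100; 100; 100; 100; 100; 100; 100; 100; 100; 100; 100; 100; 100; 100; 100; 100; 100; 100];
 [:: 100; 100; 100; 100; 100; 100; 100; 100; 100; 100; 100; 100; 100; 100; 100; 100; 100; 100; 100; 100; 100; 100; 100; 100; 100; 100; 100; 100; 100; 100; 100; 100];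
 [:: 100; 100; 100; 100; 100; 100; 100; 100; 100; 100; 100; 100; 100; 100; 100; 100; 100; 100; 100; 100; 100; 100; 100; 100; 100; 100; 100; 100; 100; 100; 100; 100];
 [:: 100; 100; 100; 100; 100; 100; 100; 100; 100; 100; 100; 100; 100; 100; 100; 100; 100; 100; 100; 100; 100; 100; 100; 100; 100; 100; 100; 100; 100; 100; 100; 100];
 [:: 100; 100; 100; 100; 100; 100; 100; 100; 100; 100; 100; 100; 100; 100; 100; 100; 100; 100; 100; 100; 100; 100; 100; 100; 100; 100; 100; 100; 100; 100; 100; 100];
 [:: 100; 100; 100; 100; 100; 100; 100; 100; 100; 100; 100; 100; 100; 100; 100; 100; 100; 100; 100; 100; 100; 100; 100; 100; 100; 100; 100; 100; 100; 100; 100; 100];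
 [:: 100; 100; 100; 100; 100; 100; 100; 100; 100; 100; 100; 100; 100; 100; 100; 100; 100; 100; 100; 100; 100; 100; 100; 100; 100; 100; 100; 100; 100; 100; 100; 100]];
[:: [:: 100; 100; 100; 100; 100; 100; 100; 100; 100; 100; 100; 100; 100; 8; 3; 3; 100; 100; 100; 100; 100; 100; 8; 8; 100; 100; 100; 3; 100; 8; 3; 3];
 [:: 100; 100; 100; 100; 100; 100; 100; 100; 100; 100; 100; 100; 100; 100; 100; 100; 100; 100; 100; 100; 8; 100; 8; 100; 8; 100; 8; 100; 8; 100; 8; 100];
 [:: 100; 100; 100; 100; 100; 100; 100; 100; 8; 8; 100; 100; 8; 8; 100; 100; 100; 100; 100; 100; 100; 100; 100; 100; 8; 8; 100; 100; 8; 8; 100; 100];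
 [:: 100; 100; 100; 100; 100; 100; 100; 100; 100; 100; 100; 100; 100; 100; 100; 100; 100; 100; 100; 100; 100; 100; 100; 100; 100; 100; 100; 100; 100; 100; 100; 100];
 [:: 8; 8; 8; 8; 100; 100; 100; 100; 8; 8; 8; 8; 100; 100; 100; 100; 8; 8; 8; 8; 100; 100; 100; 100; 8; 8; 8; 8; 100; 100; 100; 100];
 [:: 13; 100; 100; 100; 100; 100; 100; 100; 13; 100; 100; 100; 100; 100; 100; 100; 13; 100; 100; 100; 100; 100; 100; 100; 13; 100; 100; 100; 100; 100; 100; 100];
 [:: 100; 100; 100; 100; 100; 100; 100; 100; 100; 100; 100; 100; 100; 100; 100; 100; 100; 100; 100; 100; 100; 100; 100; 100; 100; 100; 100; 100; 100; 100; 100; 100];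
 [:: 100; 100; 100; 100; 100; 100; 100; 100; 100; 100; 100; 100; 100; 100; 100; 100; 100; 100; 100; 100; 100; 100; 100; 100; 100; 100; 100; 100; 100; 100; 100; 100];
 [:: 100; 100; 8; 8; 100; 100; 8; 8; 100; 100; 100; 100; 100; 100; 100; 100; 100; 100; 8; 8; 100; 100; 8; 8; 100; 100; 100; 100; 100; 100; 100; 100];
 [:: 13; 100; 13; 100; 100; 100; 100; 100; 100; 100; 100; 100; 100; 100; 100; 100; 13; 100; 13; 100; 100; 100; 100; 100; 100; 100; 100; 100; 100; 100; 100; 100];
 [:: 13; 13; 100; 100; 100; 100; 100; 100; 100; 100; 100; 100; 100; 100; 100; 100; 13; 13; 100; 100; 100; 100; 100; 100; 100; 100; 100; 100; 100; 100; 100; 100];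
 [:: 100; 100; 100; 100; 100; 100; 100; 100; 100; 100; 100; 100; 100; 100; 100; 100; 100; 100; 100; 100; 100; 100; 100; 100; 100; 100; 100; 100; 100; 100; 100; 100];
 [:: 100; 100; 100; 100; 100; 100; 100; 100; 100; 100; 100; 100; 100; 100; 100; 100; 100; 100; 100; 100; 100; 100; 100; 100; 100; 100; 100; 100; 100; 100; 100; 100];
 [:: 100; 100; 100; 100; 100; 100; 100; 100; 100; 100; 100; 100; 100; 100; 100; 100; 100; 100; 100; 100; 100; 100; 100; 100; 100; 100; 100; 100; 100; 100; 100; 100];
 [:: 100; 100; 100; 100; 100; 100; 100; 100; 100; 100; 100; 100; 100; 100; 100; 100; 100; 100; 100; 100; 100; 100; 100; 100; 100; 100; 100; 100; 100; 100; 100; 100];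
 [:: 100; 100; 100; 100; 100; 100; 100; 100; 100; 100; 100; 100; 100; 100; 100; 100; 100; 100; 100; 100; 100; 100; 100; 100; 100; 100; 100; 100; 100; 100; 100; 100];
 [:: 100; 100; 100; 8; 100; 8; 100; 8; 100; 100; 100; 8; 100; 8; 100; 8; 100; 100; 100; 100; 100; 100; 100; 100; 100; 100; 100; 100; 100; 100; 100; 100];
 [:: 13; 100; 13; 100; 13; 100; 13; 100; 13; 100; 13; 100; 13; 100; 13; 100; 100; 100; 100; 100; 100; 100; 100; 100; 100; 100; 100; 100; 100; 100; 100; 100];
 [:: 13; 13; 100; 100; 100; 100; 100; 100; 13; 13; 100; 100; 100; 100; 100; 100; 100; 100; 100; 100; 100; 100; 100; 100; 100; 100; 100; 100; 100; 100; 100; 100];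
 [:: 100; 100; 100; 100; 100; 100; 100; 100; 100; 100; 100; 100; 100; 100; 100; 100; 100; 100; 100; 100; 100; 100; 100; 100; 100; 100; 100; 100; 100; 100; 100; 100];
 [:: 13; 13; 13; 13; 100; 100; 100; 100; 100; 100; 100; 100; 100; 100; 100; 100; 100; 100; 100; 100; 100; 100; 100; 100; 100; 100; 100; 100; 100; 100; 100; 100];
 [:: 13; 100; 100; 100; 100; 100; 100; 100; 100; 100; 100; 100; 100; 100; 100; 100; 100; 100; 100; 100; 100; 100; 100; 100; 100; 100; 100; 100; 100; 100; 100; 100];
 [:: 100; 100; 100; 100; 100; 100; 100; 100; 100; 100; 100; 100; 100; 100; 100; 100; 100; 100; 100; 100; 100; 100; 100; 100; 100; 100; 100; 100; 100; 100; 100; 100];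
 [:: 100; 100; 100; 100; 100; 100; 100; 100; 100; 100; 100; 100; 100; 100; 100; 100; 100; 100; 100; 100; 100; 100; 100; 100; 100; 100; 100; 100; 100; 100; 100; 100];
 [:: 100; 100; 100; 100; 100; 100; 100; 100; 100; 100; 100; 100; 100; 100; 100; 100; 100; 100; 100; 100; 100; 100; 100; 100; 100; 100; 100; 100; 100; 100; 100; 100];
 [:: 100; 100; 100; 100; 100; 100; 100; 100; 100; 100; 100; 100; 100; 100; 100; 100; 100; 100; 100; 100; 100; 100; 100; 100; 100; 100; 100; 100; 100; 100; 100; 100];
 [:: 100; 100; 100; 100; 100; 100; 100; 100; 100; 100; 100; 100; 100; 100; 100; 100; 100; 100; 100; 100; 100; 100; 100; 100; 100; 100; 100; 100; 100; 100; 100; 100];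
 [:: 100; 100; 100; 100; 100; 100; 100; 100; 100; 100; 100; 100; 100; 100; 100; 100; 100; 100; 100; 100; 100; 100; 100; 100; 100; 100; 100; 100; 100; 100; 100; 100];
 [:: 100; 100; 100; 100; 100; 100; 100; 100; 100; 100; 100; 100; 100; 100; 100; 100; 100; 100; 100; 100; 100; 100; 100; 100; 100; 100; 100; 100; 100; 100; 100; 100];
 [:: 100; 100; 100; 100; 100; 100; 100; 100; 100; 100; 100; 100; 100; 100; 100; 100; 100; 100; 100; 100; 100; 100; 100; 100; 100; 100; 100; 100; 100; 100; 100; 100];
 [:: 100; 100; 100; 100; 100; 100; 100; 100; 100; 100; 100; 100; 100; 100; 100; 100; 100; 100; 100; 100; 100; 100; 100; 100; 100; 100; 100; 100; 100; 100; 100; 100];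
 [:: 100; 100; 100; 100; 100; 100; 100; 100; 100; 100; 100; 100; 100; 100; 100; 100; 100; 100; 100; 100; 100; 100; 100; 100; 100; 100; 100; 100; 100; 100; 100; 100]];
[:: [:: 100; 100; 100; 100; 100; 100; 100; 100; 100; 100; 7; 7; 100; 7; 7; 7; 100; 100; 100; 100; 100; 7; 7; 7; 100; 100; 7; 2; 100; 7; 7; 2];
 [:: 100; 100; 100; 100; 100; 100; 100; 100; 12; 100; 12; 100; 12; 100; 12; 100; 100; 100; 100; 100; 12; 100; 100; 100; 7; 100; 7; 100; 7; 100; 7; 100];
 [:: 100; 100; 100; 100; 100; 100; 100; 100; 12; 12; 100; 100; 12; 100; 100; 100; 7; 7; 100; 100; 7; 7; 100; 100; 7; 7; 100; 100; 7; 7; 100; 100];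
 [:: 100; 100; 100; 100; 100; 100; 100; 100; 100; 100; 100; 100; 100; 100; 100; 100; 100; 100; 100; 100; 100; 100; 100; 100; 100; 100; 100; 100; 100; 100; 100; 100];
 [:: 12; 12; 12; 12; 100; 100; 100; 100; 12; 12; 12; 12; 100; 100; 100; 100; 12; 12; 12; 12; 100; 100; 100; 100; 12; 12; 12; 12; 100; 100; 100; 100];
 [:: 12; 100; 100; 100; 100; 100; 100; 100; 12; 100; 100; 100; 100; 100; 100; 100; 12; 100; 100; 100; 100; 100; 100; 100; 12; 100; 100; 100; 100; 100; 100; 100];
 [:: 100; 100; 100; 100; 100; 100; 100; 100; 100; 100; 100; 100; 100; 100; 100; 100; 100; 100; 100; 100; 100; 100; 100; 100; 100; 100; 100; 100; 100; 100; 100; 100];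
 [:: 100; 100; 100; 100; 100; 100; 100; 100; 100; 100; 100; 100; 100; 100; 100; 100; 100; 100; 100; 100; 100; 100; 100; 100; 100; 100; 100; 100; 100; 100; 100; 100];
 [:: 100; 7; 12; 7; 100; 7; 12; 7; 100; 100; 100; 100; 100; 100; 100; 100; 100; 7; 12; 7; 100; 7; 100; 7; 100; 100; 100; 100; 100; 100; 100; 100];
 [:: 12; 100; 12; 100; 12; 100; 100; 100; 100; 100; 100; 100; 100; 100; 100; 100; 12; 100; 12; 100; 12; 100; 100; 100; 100; 100; 100; 100; 100; 100; 100; 100];
 [:: 17; 100; 100; 100; 100; 100; 100; 100; 100; 100; 100; 100; 100; 100; 100; 100; 100; 100; 100; 100; 100; 100; 100; 100; 100; 100; 100; 100; 100; 100; 100; 100];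
 [:: 100; 100; 100; 100; 100; 100; 100; 100; 100; 100; 100; 100; 100; 100; 100; 100; 100; 100; 100; 100; 100; 100; 100; 100; 100; 100; 100; 100; 100; 100; 100; 100];
 [:: 100; 100; 100; 100; 100; 100; 100; 100; 100; 100; 100; 100; 100; 100; 100; 100; 100; 100; 100; 100; 100; 100; 100; 100; 100; 100; 100; 100; 100; 100; 100; 100];
 [:: 100; 100; 100; 100; 100; 100; 100; 100; 100; 100; 100; 100; 100; 100; 100; 100; 100; 100; 100; 100; 100; 100; 100; 100; 100; 100; 100; 100; 100; 100; 100; 100];
 [:: 100; 100; 100; 100; 100; 100; 100; 100; 100; 100; 100; 100; 100; 100; 100; 100; 100; 100; 100; 100; 100; 100; 100; 100; 100; 100; 100; 100; 100; 100; 100; 100];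
 [:: 100; 100; 100; 100; 100; 100; 100; 100; 100; 100; 100; 100; 100; 100; 100; 100; 100; 100; 100; 100; 100; 100; 100; 100; 100; 100; 100; 100; 100; 100; 100; 100];
 [:: 100; 100; 12; 7; 100; 12; 12; 7; 100; 100; 12; 7; 100; 100; 12; 7; 100; 100; 100; 100; 100; 100; 100; 100; 100; 100; 100; 100; 100; 100; 100; 100];
 [:: 12; 100; 12; 100; 12; 100; 12; 100; 12; 100; 12; 100; 12; 100; 12; 100; 100; 100; 100; 100; 100; 100; 100; 100; 100; 100; 100; 100; 100; 100; 100; 100];
 [:: 12; 12; 100; 100; 12; 12; 100; 100; 12; 12; 100; 100; 100; 100; 100; 100; 100; 100; 100; 100; 100; 100; 100; 100; 100; 100; 100; 100; 100; 100; 100; 100];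
 [:: 100; 100; 100; 100; 100; 100; 100; 100; 100; 100; 100; 100; 100; 100; 100; 100; 100; 100; 100; 100; 100; 100; 100; 100; 100; 100; 100; 100; 100; 100; 100; 100];
 [:: 12; 12; 12; 12; 100; 100; 100; 100; 100; 100; 100; 100; 100; 100; 100; 100; 100; 100; 100; 100; 100; 100; 100; 100; 100; 100; 100; 100; 100; 100; 100; 100];
 [:: 100; 100; 100; 100; 100; 100; 100; 100; 100; 100; 100; 100; 100; 100; 100; 100; 100; 100; 100; 100; 100; 100; 100; 100; 100; 100; 100; 100; 100; 100; 100; 100];
 [:: 100; 100; 100; 100; 100; 100; 100; 100; 100; 100; 100; 100; 100; 100; 100; 100; 100; 100; 100; 100; 100; 100; 100; 100; 100; 100; 100; 100; 100; 100; 100; 100];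
 [:: 100; 100; 100; 100; 100; 100; 100; 100; 100; 100; 100; 100; 100; 100; 100; 100; 100; 100; 100; 100; 100; 100; 100; 100; 100; 100; 100; 100; 100; 100; 100; 100];
 [:: 100; 100; 100; 100; 100; 100; 100; 100; 100; 100; 100; 100; 100; 100; 100; 100; 100; 100; 100; 100; 100; 100; 100; 100; 100; 100; 100; 100; 100; 100; 100; 100];
 [:: 100; 100; 100; 100; 100; 100; 100; 100; 100; 100; 100; 100; 100; 100; 100; 100; 100; 100; 100; 100; 100; 100; 100; 100; 100; 100; 100; 100; 100; 100; 100; 100];
 [:: 100; 100; 100; 100; 100; 100; 100; 100; 100; 100; 100; 100; 100; 100; 100; 100; 100; 100; 100; 100; 100; 100; 100; 100; 100; 100; 100; 100; 100; 100; 100; 100];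
 [:: 100; 100; 100; 100; 100; 100; 100; 100; 100; 100; 100; 100; 100; 100; 100; 100; 100; 100; 100; 100; 100; 100; 100; 100; 100; 100; 100; 100; 100; 100; 100; 100];
 [:: 100; 100; 100; 100; 100; 100; 100; 100; 100; 100; 100; 100; 100; 100; 100; 100; 100; 100; 100; 100; 100; 100; 100; 100; 100; 100; 100; 100; 100; 100; 100; 100];
 [:: 100; 100; 100; 100; 100; 100; 100; 100; 100; 100; 100; 100; 100; 100; 100; 100; 100; 100; 100; 100; 100; 100; 100; 100; 100; 100; 100; 100; 100; 100; 100; 100];
 [:: 100; 100; 100; 100; 100; 100; 100; 100; 100; 100; 100; 100; 100; 100; 100; 100; 100; 100; 100; 100; 100; 100; 100; 100; 100; 100; 100; 100; 100; 100; 100; 100];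
 [:: 100; 100; 100; 100; 100; 100; 100; 100; 100; 100; 100; 100; 100; 100; 100; 100; 100; 100; 100; 100; 100; 100; 100; 100; 100; 100; 100; 100; 100; 100; 100; 100]];
[:: [:: 100; 100; 100; 100; 100; 100; 100; 100; 100; 100; 8; 4; 100; 6; 6; 4; 100; 100; 100; 100; 100; 5; 6; 5; 100; 100; 4; 4; 100; 5; 4; 4];
 [:: 100; 100; 100; 100; 100; 100; 100; 100; 9; 100; 9; 100; 9; 100; 9; 100; 100; 100; 100; 100; 6; 100; 6; 100; 9; 100; 9; 100; 6; 100; 6; 100];
 [:: 100; 100; 100; 100; 100; 100; 100; 100; 8; 8; 100; 100; 8; 8; 100; 100; 7; 7; 100; 100; 7; 7; 100; 100; 7; 7; 100; 100; 7; 7; 100; 100];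
 [:: 100; 100; 100; 100; 100; 100; 100; 100; 100; 100; 100; 100; 100; 100; 100; 100; 100; 100; 100; 100; 100; 100; 100; 100; 100; 100; 100; 100; 100; 100; 100; 100];
 [:: 10; 10; 10; 10; 100; 100; 100; 100; 10; 10; 10; 10; 100; 100; 100; 100; 10; 10; 10; 10; 100; 100; 100; 100; 10; 10; 10; 10; 100; 100; 100; 100];
 [:: 10; 100; 100; 100; 100; 100; 100; 100; 10; 100; 100; 100; 100; 100; 100; 100; 10; 100; 100; 100; 100; 100; 100; 100; 10; 100; 100; 100; 100; 100; 100; 100];
 [:: 100; 100; 100; 100; 100; 100; 100; 100; 100; 100; 100; 100; 100; 100; 100; 100; 100; 100; 100; 100; 100; 100; 100; 100; 100; 100; 100; 100; 100; 100; 100; 100];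
 [:: 100; 100; 100; 100; 100; 100; 100; 100; 100; 100; 100; 100; 100; 100; 100; 100; 100; 100; 100; 100; 100; 100; 100; 100; 100; 100; 100; 100; 100; 100; 100; 100];
 [:: 100; 7; 8; 7; 100; 7; 8; 7; 100; 100; 100; 100; 100; 100; 100; 100; 100; 7; 8; 7; 100; 7; 8; 7; 100; 100; 100; 100; 100; 100; 100; 100];
 [:: 12; 100; 14; 100; 12; 100; 100; 100; 100; 100; 100; 100; 100; 100; 100; 100; 12; 100; 14; 100; 12; 100; 100; 100; 100; 100; 100; 100; 100; 100; 100; 100];
 [:: 11; 11; 100; 100; 100; 100; 100; 100; 100; 100; 100; 100; 100; 100; 100; 100; 11; 11; 100; 100; 100; 100; 100; 100; 100; 100; 100; 100; 100; 100; 100; 100];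
 [:: 100; 100; 100; 100; 100; 100; 100; 100; 100; 100; 100; 100; 100; 100; 100; 100; 100; 100; 100; 100; 100; 100; 100; 100; 100; 100; 100; 100; 100; 100; 100; 100];
 [:: 100; 100; 100; 100; 100; 100; 100; 100; 100; 100; 100; 100; 100; 100; 100; 100; 100; 100; 100; 100; 100; 100; 100; 100; 100; 100; 100; 100; 100; 100; 100; 100];
 [:: 100; 100; 100; 100; 100; 100; 100; 100; 100; 100; 100; 100; 100; 100; 100; 100; 100; 100; 100; 100; 100; 100; 100; 100; 100; 100; 100; 100; 100; 100; 100; 100];
 [:: 100; 100; 100; 100; 100; 100; 100; 100; 100; 100; 100; 100; 100; 100; 100; 100; 100; 100; 100; 100; 100; 100; 100; 100; 100; 100; 100; 100; 100; 100; 100; 100];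
 [:: 100; 100; 100; 100; 100; 100; 100; 100; 100; 100; 100; 100; 100; 100; 100; 100; 100; 100; 100; 100; 100; 100; 100; 100; 100; 100; 100; 100; 100; 100; 100; 100];
 [:: 100; 100; 9; 9; 100; 6; 9; 6; 100; 100; 9; 9; 100; 6; 9; 6; 100; 100; 100; 100; 100; 100; 100; 100; 100; 100; 100; 100; 100; 100; 100; 100];
 [:: 14; 100; 14; 100; 11; 100; 11; 100; 14; 100; 14; 100; 11; 100; 14; 100; 100; 100; 100; 100; 100; 100; 100; 100; 100; 100; 100; 100; 100; 100; 100; 100];
 [:: 12; 12; 100; 100; 12; 12; 100; 100; 14; 14; 100; 100; 100; 100; 100; 100; 100; 100; 100; 100; 100; 100; 100; 100; 100; 100; 100; 100; 100; 100; 100; 100];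
 [:: 100; 100; 100; 100; 100; 100; 100; 100; 100; 100; 100; 100; 100; 100; 100; 100; 100; 100; 100; 100; 100; 100; 100; 100; 100; 100; 100; 100; 100; 100; 100; 100];
 [:: 10; 10; 10; 10; 100; 100; 100; 100; 100; 100; 100; 100; 100; 100; 100; 100; 100; 100; 100; 100; 100; 100; 100; 100; 100; 100; 100; 100; 100; 100; 100; 100];
 [:: 14; 100; 100; 100; 100; 100; 100; 100; 100; 100; 100; 100; 100; 100; 100; 100; 100; 100; 100; 100; 100; 100; 100; 100; 100; 100; 100; 100; 100; 100; 100; 100];
 [:: 100; 100; 100; 100; 100; 100; 100; 100; 100; 100; 100; 100; 100; 100; 100; 100; 100; 100; 100; 100; 100; 100; 100; 100; 100; 100; 100; 100; 100; 100; 100; 100];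
 [:: 100; 100; 100; 100; 100; 100; 100; 100; 100; 100; 100; 100; 100; 100; 100; 100; 100; 100; 100; 100; 100; 100; 100; 100; 100; 100; 100; 100; 100; 100; 100; 100];
 [:: 100; 100; 100; 100; 100; 100; 100; 100; 100; 100; 100; 100; 100; 100; 100; 100; 100; 100; 100; 100; 100; 100; 100; 100; 100; 100; 100; 100; 100; 100; 100; 100];
 [:: 100; 100; 100; 100; 100; 100; 100; 100; 100; 100; 100; 100; 100; 100; 100; 100; 100; 100; 100; 100; 100; 100; 100; 100; 100; 100; 100; 100; 100; 100; 100; 100];
 [:: 100; 100; 100; 100; 100; 100; 100; 100; 100; 100; 100; 100; 100; 100; 100; 100; 100; 100; 100; 100; 100; 100; 100; 100; 100; 100; 100; 100; 100; 100; 100; 100];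
 [:: 100; 100; 100; 100; 100; 100; 100; 100; 100; 100; 100; 100; 100; 100; 100; 100; 100; 100; 100; 100; 100; 100; 100; 100; 100; 100; 100; 100; 100; 100; 100; 100];
 [:: 100; 100; 100; 100; 100; 100; 100; 100; 100; 100; 100; 100; 100; 100; 100; 100; 100; 100; 100; 100; 100; 100; 100; 100; 100; 100; 100; 100; 100; 100; 100; 100];
 [:: 100; 100; 100; 100; 100; 100; 100; 100; 100; 100; 100; 100; 100; 100; 100; 100; 100; 100; 100; 100; 100; 100; 100; 100; 100; 100; 100; 100; 100; 100; 100; 100];
 [:: 100; 100; 100; 100; 100; 100; 100; 100; 100; 100; 100; 100; 100; 100; 100; 100; 100; 100; 100; 100; 100; 100; 100; 100; 100; 100; 100; 100; 100; 100; 100; 100];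
 [:: 100; 100; 100; 100; 100; 100; 100; 100; 100; 100; 100; 100; 100; 100; 100; 100; 100; 100; 100; 100; 100; 100; 100; 100; 100; 100; 100; 100; 100; 100; 100; 100]]].
Definition phi (k a b : nat) : nat := nth 100 (nth [::] (nth [::] tbl k) a) b.
Definition chkC k a b c := validc a b c ==>
  ((phi (minn k.+1 5) b c < 100) && (phi (minn k.+1 5) b c + 6 <= phi k a b + 5 * popc b)).
Definition chkB k a b := (phi k a b < 100) ==> all (chkC k a b) (iota 0 32).
Definition chkA k a := all (chkB k a) (iota 0 32).
Definition chkK k := all (chkA k) (iota 0 32).
Definition chkP : bool := all chkK (iota 0 6).
Lemma chkP_ok : chkP. Proof. vm_compute. reflexivity. Qed.
Definition chkS : bool := all (fun y => phi 0 0 y == 6) (iota 0 32).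
Lemma chkS_ok : chkS. Proof. vm_compute. reflexivity. Qed.
Definition chkE : bool := all (fun x => (phi 5 x 0 < 100) ==> (10 <= phi 5 x 0)) (iota 0 32).
Lemma chkE_ok : chkE. Proof. vm_compute. reflexivity. Qed.
Fixpoint wk (a : nat) (l : seq nat) : bool :=
  if l is b :: l' then validc a b (head 0 l') && wk b l' else true.
Lemma wkP a l j : wk a l -> j < size l ->
  validc (if j is j'.+1 then nth 0 l j' else a) (nth 0 l j) (nth 0 l j.+1).
Proof.
elim: l a j => [|b l IH] a [|j] //=.
  by move=> /andP [h _] _; rewrite nth0.
move=> /andP [_ h] hj; have := IH b j h hj.
by case: j {hj}.
Qed.
Definition Qp : seq nat := [:: 2;16;5;16;2;8;1;20;1;8].
Lemma wkQ1 T : wk 1 (8 :: Qp ++ T) = wk 1 (8 :: T).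
Proof. by []. Qed.
Lemma wkQ k T : wk 1 (8 :: flatten (nseq k Qp) ++ T) = wk 1 (8 :: T).
Proof. by elim: k => [|k IH] //=; rewrite -catA wkQ1. Qed.
Definition sufs : seq (seq nat) := [::
  [:: 2;16;5]; [:: 2;17;4;9]; [:: 2;16;5;8;18]; [:: 2;16;5;16;2;9];
  [:: 2;16;5;8;2;16;5]; [:: 2;16;5;16;2;8;1;20]; [:: 2;16;5;8;2;16;5;8;18];
  [:: 2;16;5;8;2;16;5;16;2;9]; [:: 2;16;5;8;2;16;5;8;2;16;5];
  [:: 2;16;5;8;2;16;5;16;2;8;1;20]].
Definition cols (n : nat) : seq nat :=
  if n == 5 then [:: 4;17;4;17;4]
  else [:: 20;1;8] ++ flatten (nseq ((n - 6) %/ 10) Qp) ++ nth [::] sufs ((n - 6) %% 10).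
Lemma sufs_ok r : r < 10 -> [/\ wk 1 (8 :: nth [::] sufs r), size (nth [::] sufs r) = r + 3,
   all (fun x => x < 32) (nth [::] sufs r) & 4 + sumn (map popc (nth [::] sufs r)) = (44 + 6 * r) %/ 5].
Proof. by do 10! (case: r => [|r] //). Qed.
Lemma cols_ok n : 5 <= n -> [/\ wk 0 (cols n), size (cols n) = n,
   all (fun x => x < 32) (cols n) & sumn (map popc (cols n)) = (6 * n + 8) %/ 5].
Proof.
move=> hn; rewrite /cols; case: eqP => [-> //|ne].
set k := (n - 6) %/ 10; set r := (n - 6) %% 10.
have hr : r < 10 by rewrite ltn_mod.
case: (sufs_ok hr) => h1 h2 h3 h4.
have en : n = 6 + 10 * k + r by rewrite /k /r; lia.
clearbody k r.
have sQ : forall k, size (flatten (nseq k Qp)) = 10 * k.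
  elim=> [|j IH] //; change (flatten (nseq j.+1 Qp)) with (Qp ++ flatten (nseq j Qp)).
  by rewrite size_cat IH [size Qp]/=; lia.
have aQ : forall k, all (fun x => x < 32) (flatten (nseq k Qp)).
  by elim=> [|j IH] //=.
have pQ : forall k, sumn (map popc (flatten (nseq k Qp))) = 12 * k.
  elim=> [|j IH] //; change (flatten (nseq j.+1 Qp)) with (Qp ++ flatten (nseq j Qp)).
  by rewrite map_cat sumn_cat IH (_ : sumn (map popc Qp) = 12) //; lia.
split.
- rewrite (_ : wk 0 _ = wk 1 (8 :: (flatten (nseq k Qp) ++ nth [::] sufs r))) //.
  by rewrite wkQ.
- by rewrite /= size_cat sQ h2; lia.
- by rewrite /= all_cat aQ h3.
- rewrite /= map_cat sumn_cat pQ (_ : popc 20 = 2) // (_ : popc 1 = 1) // (_ : popc 8 = 1) //.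
  move: h4; rewrite en; lia.
Qed.
Section S.
Variables (n : nat) (S : {set 'I_5 * 'I_n}).
Definition inS (i j : nat) : bool := [exists u in S, ((u.1 : nat) == i) && ((u.2 : nat) == j)].
Lemma inS_ord (u : 'I_5 * 'I_n) : inS u.1 u.2 = (u \in S).
Proof.
apply/existsP/idP => [[w /andP [wS /andP [/eqP e1 /eqP e2]]]|uS].
  by have -> : u = w by case: u w e1 e2 wS => [a b] [c d] /= /val_inj -> /val_inj ->.
by exists u; rewrite uS !eqxx.
Qed.
Lemma inS_bound i j : inS i j -> (i < 5) && (j < n).
Proof. by case/existsP => -[a b] /andP [_ /andP [/eqP <- /eqP <-]] /=; rewrite !ltn_ord. Qed.
Lemma inS_oob i j : (5 <= i) || (n <= j) -> inS i j = false.
Proof. move=> h; apply/negbTE/negP => H; move: (inS_bound H); lia. Qed.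
Lemma card_sum (P : pred ('I_5 * 'I_n)) :
  #|[set w in S | P w]| = \sum_w ((w \in S) && P w).
Proof.
rewrite -sum1_card big_mkcond /=; apply: eq_bigr => w _.
by rewrite inE; case: (_ && _).
Qed.
Lemma delta_sum a b :
  \sum_(w : 'I_5 * 'I_n) ((w \in S) && ((w.1 : nat) == a) && ((w.2 : nat) == b)) = inS a b.
Proof.
case: (boolP (inS a b)) => [/existsP [w0 /andP [w0S /andP [/eqP e1 /eqP e2]]] | h].
  rewrite (bigD1 w0) //= w0S e1 e2 !eqxx /= big1 // => w ne.
  apply/eqP; rewrite eqb0; apply/negP => /andP [/andP [_ /eqP f1] /eqP f2]; move/negP: ne; apply.
  by apply/eqP; case: w w0 e1 e2 f1 f2 {w0S} => [x y] [z t] /= <- <- /val_inj -> /val_inj ->.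
rewrite big1 // => w _; apply/eqP; rewrite eqb0; apply/negP => /andP [/andP [wS /eqP f1] /eqP f2].
by move/negP: h; apply; apply/existsP; exists w; rewrite wS f1 f2 !eqxx.
Qed.
Lemma adj_split (s : bool) (i j a b : nat) :
 (s && ((i == a) && ((j.+1 == b) || (b.+1 == j)) || (j == b) && ((i.+1 == a) || (a.+1 == i)))) =
 (s && (a == i) && (b == j.+1)) + (s && (a==i) && (b.+1 == j)) + (s && (a == i.+1) && (b == j))
  + (s && (a.+1 == i) && (b == j)) :> nat.
Proof. case: s => //=; repeat case: eqP => //=; lia. Qed.
Lemma delta_l a j :
  \sum_(w : 'I_5 * 'I_n) ((w \in S) && ((w.1 : nat) == a) && ((w.2 : nat).+1 == j))
  = ((if j is j'.+1 then inS a j' else false) : bool) :> nat.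
Proof.
case: j => [|j]; first by rewrite big1 // => w _; rewrite andbF.
by under eq_bigr => w _ do rewrite eqSS; rewrite delta_sum.
Qed.
Lemma delta_u i b :
  \sum_(w : 'I_5 * 'I_n) ((w \in S) && ((w.1 : nat).+1 == i) && ((w.2 : nat) == b))
  = ((if i is i'.+1 then inS i' b else false) : bool) :> nat.
Proof.
case: i => [|i]; first by rewrite big1 // => w _; rewrite andbF andFb.
by under eq_bigr => w _ do rewrite eqSS; rewrite delta_sum.
Qed.
Definition cnt (i j : nat) : nat :=
  inS i j.+1 + ((if j is j'.+1 then inS i j' else false) : bool) + inS i.+1 j +
  ((if i is i'.+1 then inS i' j else false) : bool).
Lemma nbr_cnt (v : 'I_5 * 'I_n) :
  nbr_count (grid_adj 5 n) S v = cnt v.1 v.2.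
Proof.
rewrite /nbr_count card_sum.
under eq_bigr => w _ do rewrite /grid_adj -!val_eqE /= adj_split.
rewrite !big_split /= /cnt.
by rewrite delta_l delta_u !delta_sum.
Qed.
Definition okAt (i j : nat) : bool :=
  okA (if j is j'.+1 then inS i j' else false) (inS i j.+1)
      (if i is i'.+1 then inS i' j else false) (inS i.+1 j) (inS i j).
Lemma okAtE i j : okAt i j =
  [&& ~~ (inS i j && inS i j.+1), ~~ (inS i j && inS i.+1 j) &
     (inS i j || ((0 < cnt i j) && (cnt i j <= 2)))].
Proof. by rewrite /okAt /okA /cnt -andbA. Qed.
Lemma inS_wit i j : inS i j -> exists2 u : 'I_5 * 'I_n, u \in S & ((u.1 : nat) = i) /\ ((u.2 : nat) = j).
Proof. by case/existsP => u /andP [uS /andP [/eqP e1 /eqP e2]]; exists u. Qed.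
Lemma indep12_iff : indep12 (grid_adj 5 n) S <-> (forall i j, i < 5 -> j < n -> okAt i j).
Proof.
split.
  case/and3P => /forall_inP Hind _ /forall_inP H12 i j hi hj.
  rewrite okAtE; apply/and3P; split.
  - apply/negP => /andP [/inS_wit [u uS [e1 e2]] /inS_wit [w wS [f1 f2]]].
    move: (Hind u uS) => /forall_inP /(_ w wS); rewrite /grid_adj -!val_eqE /= e1 e2 f1 f2.
    by rewrite !eqxx.
  - apply/negP => /andP [/inS_wit [u uS [e1 e2]] /inS_wit [w wS [f1 f2]]].
    move: (Hind u uS) => /forall_inP /(_ w wS); rewrite /grid_adj -!val_eqE /= e1 e2 f1 f2.
    by rewrite !eqxx orbT.
  - case: (boolP (inS i j)) => //= hS.
    have := H12 (Ordinal hi, Ordinal hj).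
    rewrite in_setC -inS_ord /= (negbTE hS) nbr_cnt /=; exact.
move=> H; apply/and3P; split.
- apply/forall_inP => u uS; apply/forall_inP => w wS; apply/negP.
  rewrite /grid_adj -!val_eqE /=.
  have hu := H _ _ (ltn_ord u.1) (ltn_ord u.2).
  have hw := H _ _ (ltn_ord w.1) (ltn_ord w.2).
  rewrite okAtE inS_ord uS /= in hu; rewrite okAtE inS_ord wS /= in hw.
  case/orP => /andP [/eqP e /orP [] /eqP e'].
  + by move: hu; rewrite e e' inS_ord wS.
  + by move: hw; rewrite e' -e inS_ord uS.
  + by move: hu; rewrite e e' inS_ord wS andbF.
  + by move: hw; rewrite e' -e inS_ord uS andbF.
- apply/forall_inP => v; rewrite in_setC => vS.
  have := H _ _ (ltn_ord v.1) (ltn_ord v.2).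
  by rewrite okAtE inS_ord (negbTE vS) /= nbr_cnt => /andP [].
- apply/forall_inP => v; rewrite in_setC => vS.
  have := H _ _ (ltn_ord v.1) (ltn_ord v.2).
  by rewrite okAtE inS_ord (negbTE vS) /= nbr_cnt.
Qed.
Definition code (j : nat) : nat :=
  inS 0 j + 2 * inS 1 j + 4 * inS 2 j + 8 * inS 3 j + 16 * inS 4 j.
Definition cprev (j : nat) : nat := if j is j'.+1 then code j' else 0.
Lemma bits5 (b0 b1 b2 b3 b4 : bool) (m := b0 + 2 * b1 + 4 * b2 + 8 * b3 + 16 * b4) :
  [/\ bitm m 0 = b0, bitm m 1 = b1, bitm m 2 = b2, bitm m 3 = b3 & bitm m 4 = b4] /\ m < 32.
Proof. by rewrite {}/m; case: b0; case: b1; case: b2; case: b3; case: b4. Qed.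
Lemma code_bits j : [/\ bitm (code j) 0 = inS 0 j, bitm (code j) 1 = inS 1 j,
  bitm (code j) 2 = inS 2 j, bitm (code j) 3 = inS 3 j & bitm (code j) 4 = inS 4 j].
Proof. exact: (bits5 _ _ _ _ _).1. Qed.
Lemma code_lt j : code j < 32.
Proof. exact: (bits5 _ _ _ _ _).2. Qed.
Lemma cprev_lt j : cprev j < 32.
Proof. case: j => [|j] //=; exact: code_lt. Qed.
Lemma popc_code j : popc (code j) = inS 0 j + inS 1 j + inS 2 j + inS 3 j + inS 4 j.
Proof. by rewrite /popc; case: (code_bits j) => -> -> -> -> ->. Qed.
Lemma code_oob j : n <= j -> code j = 0.
Proof. by move=> h; rewrite /code !inS_oob // h orbT. Qed.
Lemma valid_code j : validc (cprev j) (code j) (code j.+1) =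
  [&& okAt 0 j, okAt 1 j, okAt 2 j, okAt 3 j & okAt 4 j].
Proof.
rewrite /validc /okAt (_ : inS 5 j = false); last by rewrite inS_oob.
case: (code_bits j) => -> -> -> -> ->; case: (code_bits j.+1) => -> -> -> -> ->.
case: j => [|j] /=; last case: (code_bits j) => -> -> -> -> ->.
  by rewrite /bitm !div0n !andbA.
by rewrite !andbA.
Qed.
Lemma card_code : #|S| = \sum_(j < n) popc (code j).
Proof.
rewrite -sum1_card big_mkcond /=.
rewrite (eq_bigr (fun u : 'I_5 * 'I_n => nat_of_bool (inS u.1 u.2))); last first.
  by move=> u _; rewrite inS_ord; case: (u \in S).
rewrite -(pair_big xpredT xpredT (fun (i : 'I_5) (j : 'I_n) => nat_of_bool (inS i j))) /=.
rewrite exchange_big /=; apply: eq_bigr => j _.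
by rewrite popc_code !big_ord_recr big_ord0 /=.
Qed.
Lemma chkP_spec k a b c : k < 6 -> a < 32 -> b < 32 -> c < 32 -> phi k a b < 100 ->
  validc a b c -> phi (minn k.+1 5) b c < 100 /\ phi (minn k.+1 5) b c + 6 <= phi k a b + 5 * popc b.
Proof.
move=> hk ha hb hc hp hv.
have mk : k \in iota 0 6 by rewrite mem_iota.
have ma : a \in iota 0 32 by rewrite mem_iota.
have mb : b \in iota 0 32 by rewrite mem_iota.
have mc : c \in iota 0 32 by rewrite mem_iota.
move: chkP_ok; rewrite /chkP => /allP /(_ k mk); rewrite /chkK => /allP /(_ a ma); rewrite /chkA => /allP /(_ b mb).
rewrite /chkB hp implyTb => /allP /(_ c mc); rewrite /chkC hv implyTb.
by case/andP.
Qed.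
Lemma chkS_spec y : y < 32 -> phi 0 0 y = 6.
Proof. move=> hy; have my : y \in iota 0 32 by rewrite mem_iota.
by move: chkS_ok; rewrite /chkS => /allP /(_ y my) /eqP. Qed.
Lemma chkE_spec x : x < 32 -> phi 5 x 0 < 100 -> 10 <= phi 5 x 0.
Proof. move=> hx; have mx : x \in iota 0 32 by rewrite mem_iota.
by move: chkE_ok; rewrite /chkE => /allP /(_ x mx) /implyP. Qed.
Lemma lower_bound : 5 <= n -> indep12 (grid_adj 5 n) S -> (6 * n + 8) %/ 5 <= #|S|.
Proof.
move=> hn /indep12_iff H.
have key : forall m, m <= n -> phi (minn m 5) (cprev m) (code m) < 100 /\
   6 * m + phi (minn m 5) (cprev m) (code m) <= 5 * \sum_(j < m) popc (code j) + 6.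
  elim=> [|m IH] hm.
    by rewrite big_ord0 /= chkS_spec ?code_lt.
  have [IH1 IH2] := IH (ltnW hm).
  have hv : validc (cprev m) (code m) (code m.+1).
    by rewrite valid_code !H.
  have hk : minn m 5 < 6 by lia.
  have := chkP_spec hk (cprev_lt m) (code_lt m) (code_lt m.+1) IH1 hv.
  have -> : minn (minn m 5).+1 5 = minn m.+1 5 by lia.
  rewrite big_ord_recr /= => -[h1 h2].
  split => //.
  move: h2 IH2; set P := phi _ (code m) _; set Q := phi _ (cprev m) _.
  set s := \sum_(i < m) _; set p := popc _; lia.
have [k1 k2] := key n (leqnn n).
rewrite code_oob // in k1 k2.
have hmin : minn n 5 = 5 by lia.
rewrite hmin in k1 k2.
have := chkE_spec (cprev_lt n) k1.
rewrite card_code; lia.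
Qed.
End S.
Lemma recon m : m < 32 -> bitm m 0 + 2 * bitm m 1 + 4 * bitm m 2 + 8 * bitm m 3 + 16 * bitm m 4 = m.
Proof.
move=> hm; have mm : m \in iota 0 32 by rewrite mem_iota.
have chk : all (fun m => bitm m 0 + 2 * bitm m 1 + 4 * bitm m 2 + 8 * bitm m 3 + 16 * bitm m 4 == m) (iota 0 32) by [].
by move/allP: chk => /(_ m mm) /eqP.
Qed.
Lemma sum_nth (f : nat -> nat) (l : seq nat) :
  \sum_(j < size l) f (nth 0 l j) = sumn (map f l).
Proof. by rewrite sumnE big_map (big_nth 0) big_mkord. Qed.
Lemma upper n : 5 <= n -> exists S : {set 'I_5 * 'I_n},
  indep12 (grid_adj 5 n) S /\ #|S| = (6 * n + 8) %/ 5.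
Proof.
move=> hn; case: (cols_ok hn) => hw hs ha hp.
set l := cols n in hw hs ha hp.
pose S0 := [set v : 'I_5 * 'I_n | bitm (nth 0 l v.2) v.1].
have inS0 : forall i j, inS S0 i j = [&& i < 5, j < n & bitm (nth 0 l j) i].
  move=> i j; apply/existsP/idP.
    case=> -[a b] /andP []; rewrite inE /= => h /andP [/eqP <- /eqP <-].
    by rewrite !ltn_ord h.
  case/and3P => hi hj hb; exists (Ordinal hi, Ordinal hj).
  by rewrite inE /= hb !eqxx.
have hcode : forall j, code S0 j = nth 0 l j.
  move=> j; rewrite /code !inS0 /=; case: (ltnP j n) => hj /=.
    by rewrite recon //; apply: (allP ha); rewrite mem_nth // hs.
  by rewrite nth_default // hs.
exists S0; split.
  apply/indep12_iff => i j hi hj.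
  have hv := wkP hw (j := j); rewrite hs in hv; have := hv hj.
  have -> : (if j is j'.+1 then nth 0 l j' else 0) = cprev S0 j by case: j {hv hj} => //= j.
  rewrite -(hcode j) -(hcode j.+1) valid_code => /and5P [h0 h1 h2 h3 h4].
  by do 5! (case: i hi => [|i] hi //).
rewrite card_code (eq_bigr (fun j : 'I_n => popc (nth 0 l j))); last by move=> j _; rewrite hcode.
rewrite -hp -sum_nth; clearbody l; clear -hs; by case: n / hs.
Qed.
Theorem mainTheorem6 (n : nat) (hn : 5 <= n) :
  indep12_number_is (grid_adj 5 n) ((6 * n + 8) %/ 5).
Proof.
split; first exact: upper.
by move=> S; apply: lower_bound.
Qed.
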